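(* Let $\mathcal{H}$ be a complex Hilbert space and $A,B,X\in\mathcal{B}(\mathcal{H})$. Then \[ \omega(A^{*}XB)\leq \frac{1}{4}\|AA^{*}X+XBB^{*}\|+\frac{1}{2}\,\omega\!\left(\begin{bmatrix} XBA^{*}&0\\ 0& BA^{*}X \end{bmatrix}\right), \] where the $2\times 2$ operator matrix acts on $\mathcal{H}\oplus\mathcal{H}$.
   Context: $\omega(T)=\sup\{|\langle Tx,x\rangle|:\|x\|=1\}$ denotes the numerical radius and $\|\cdot\|$ the operator norm. *)

(* Defs.v *)
From HB Require Import structures.
From mathcomp Require Import all_boot all_order all_algebra.
From mathcomp Require Import complex.
From mathcomp Require Import all_classical all_reals ereal.
Set Implicit Arguments. Unset Strict Implicit. Unset Printing Implicit Defensive.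
Import Order.TTheory GRing.Theory Num.Theory.
Local Open Scope ring_scope.
Local Open Scope classical_set_scope.

Section Hilbert.
Variable R : realType.

Definition hnorm {U : Type} (ip : U -> U -> R[i]) (x : U) : R :=
  Num.sqrt (complex.Re (ip x x)).

Definition is_inner_product (V : lmodType R[i]) (ip : V -> V -> R[i]) : Prop :=
  [/\ (forall (a : R[i]) (x y z : V), ip (a *: x + y) z = a * ip x z + ip y z),
      (forall x y : V, ip y x = (ip x y)^*%C),
      (forall x : V, 0 <= ip x x) &
      (forall x : V, ip x x = 0 -> x = 0)].

Definition ip_complete (V : lmodType R[i]) (ip : V -> V -> R[i]) : Prop :=
  forall u : nat -> V,
    (forall e : R, 0 < e -> exists N : nat, forall m n : nat,
        (N <= m)%N -> (N <= n)%N -> hnorm ip (u m - u n) < e) ->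
    exists l : V, forall e : R, 0 < e -> exists N : nat, forall n : nat,
        (N <= n)%N -> hnorm ip (u n - l) < e.

Definition is_hilbert (V : lmodType R[i]) (ip : V -> V -> R[i]) : Prop :=
  is_inner_product ip /\ ip_complete ip.

Definition bounded_op (V : lmodType R[i]) (ip : V -> V -> R[i]) (T : V -> V) : Prop :=
  [/\ (forall x y : V, T (x + y) = T x + T y),
      (forall (a : R[i]) (x : V), T (a *: x) = a *: T x) &
      exists M : R, forall x : V, hnorm ip (T x) <= M * hnorm ip x].

Definition is_adjoint (V : lmodType R[i]) (ip : V -> V -> R[i]) (T Ts : V -> V) : Prop :=
  forall x y : V, ip (T x) y = ip x (Ts y).

Definition opnorm {U : Type} (ip : U -> U -> R[i]) (T : U -> U) : \bar R :=
  ereal_sup [set (hnorm ip (T x))%:E | x in [set x | hnorm ip x = 1]].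

Definition numrad {U : Type} (ip : U -> U -> R[i]) (T : U -> U) : \bar R :=
  ereal_sup [set (complex.Re `|ip (T x) x|)%:E | x in [set x | hnorm ip x = 1]].

Definition dsum_ip {V : Type} (ip : V -> V -> R[i]) (p q : V * V) : R[i] :=
  ip p.1 q.1 + ip p.2 q.2.

End Hilbert.

Definition opmx {V : zmodType} (T11 T12 T21 T22 : V -> V) (p : V * V) : V * V :=
  (T11 p.1 + T12 p.2, T21 p.1 + T22 p.2)%R.

(* Main.v *)
Require Import Defs.
From HB Require Import structures.
From mathcomp Require Import all_boot all_order all_algebra.
From mathcomp Require Import complex.
From mathcomp Require Import all_classical all_reals ereal.
From mathcomp Require Import ring lra.
Import Order.TTheory GRing.Theory Num.Theory.
Local Open Scope ring_scope.
Local Open Scope complex_scope.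
Local Open Scope classical_set_scope.

Section IP.
Variable R : realType.
Variable V : lmodType R[i].
Variable ip : V -> V -> R[i].
Hypothesis hip : is_inner_product ip.

Local Notation r p q := (complex.Re (ip p q)).
Local Notation nrm := (hnorm ip).

Lemma Re_rM (t : R) (z : R[i]) : complex.Re (t%:C * z) = t * complex.Re z.
Proof. by case: z => a b /=; rewrite mul0r subr0. Qed.

Lemma Re_conj (z : R[i]) : complex.Re (z^*%C) = complex.Re z.
Proof. by case: z. Qed.

Lemma conjD (a b : R[i]) : (a + b)^*%C = a^*%C + b^*%C.
Proof. by case: a; case: b => ? ? ? ? /=; rewrite opprD. Qed.

Lemma conjM (a b : R[i]) : (a * b)^*%C = a^*%C * b^*%C.
Proof. case: a; case: b => ? ? ? ? /=; rewrite [RHS]/(_ * _) /=; congr Complex; ring. Qed.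

Lemma ip_addl x y z : ip (x + y) z = ip x z + ip y z.
Proof. by case: hip => h _ _ _; rewrite -[x]scale1r h mul1r scale1r. Qed.

Lemma ip0l z : ip 0 z = 0.
Proof. have := ip_addl 0 0 z; rewrite addr0 => /eqP; rewrite -subr_eq0 opprD addrA subrr add0r oppr_eq0 => /eqP //. Qed.

Lemma ip_scalel a x z : ip (a *: x) z = a * ip x z.
Proof. by case: hip => h _ _ _; rewrite -[a *: x]addr0 h ip0l addr0. Qed.

Lemma ip_conj x y : ip y x = (ip x y)^*%C.
Proof. by case: hip. Qed.

Lemma ip_addr x y z : ip z (x + y) = ip z x + ip z y.
Proof. by rewrite ip_conj ip_addl conjD -!ip_conj. Qed.

Lemma ip_scaler a x z : ip z (a *: x) = a^*%C * ip z x.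
Proof. by rewrite ip_conj ip_scalel conjM -ip_conj. Qed.

Lemma ip0r z : ip z 0 = 0.
Proof. by rewrite ip_conj ip0l conjc0. Qed.

Lemma r_sym p q : r p q = r q p.
Proof. by rewrite ip_conj Re_conj. Qed.

Lemma r_ge0 p : 0 <= r p p.
Proof. by case: hip => _ _ h _; have := h p; rewrite lecE => /andP[]. Qed.

Lemma nrm_ge0 p : 0 <= nrm p.
Proof. exact: sqrtr_ge0. Qed.

Lemma nrm_sq p : nrm p ^+ 2 = r p p.
Proof. by rewrite /hnorm sqr_sqrtr // r_ge0. Qed.

Lemma nrm0_eq p : nrm p = 0 -> p = 0.
Proof.
move=> h; case: hip => _ _ h1 h2; apply: h2.
have hr : r p p = 0 by rewrite -nrm_sq h expr0n.
have := h1 p; rewrite lecE => /andP[/eqP hi _].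
move: hr hi; case: (ip p p) => a b /= -> ->. done.
Qed.

Lemma expand_u (u : R[i]) (t : R) a1 b1 a2 b2 :
  complex.Re (u * ip (a1 + t%:C *: b1) (a2 + t%:C *: b2)) =
  complex.Re (u * ip a1 a2) + t * (complex.Re (u * ip a1 b2) + complex.Re (u * ip b1 a2))
  + t ^+ 2 * complex.Re (u * ip b1 b2).
Proof.
rewrite ip_addl !ip_addr !ip_scalel !ip_scaler conjc_real.
rewrite !mulrDr !raddfD /=.
rewrite !mulrA ![u * t%:C]mulrC -!mulrA !Re_rM.
rewrite ![u * (t%:C * _)]mulrA ![u * t%:C]mulrC -!mulrA !Re_rM.
rewrite ?expr2; lra.
Qed.

Lemma quad_cs (a b c : R) : 0 <= a -> 0 <= c ->
  (forall t : R, 0 <= a + t * (2 * b) + t ^+ 2 * c) -> b ^+ 2 <= a * c.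
Proof.
move=> ha hc h.
have [c0|cpos] := eqVneq c 0.
  have b0 : b = 0.
    apply/eqP; apply/negPn/negP => bn.
    have := h (- (a + 1) / (2 * b)); rewrite c0 mulr0 addr0.
    rewrite mulrAC -mulrA divff ?mulf_neq0 // mulr1; lra.
  by rewrite b0 c0 expr0n /= mulr0.
have cgt : 0 < c by rewrite lt_def cpos hc.
set v := b / c.
have hb : b = v * c by rewrite /v mulrVK // unitfE.
have := h (- v); rewrite hb => H.
have H2 : 0 <= a - v ^+ 2 * c by move: H; rewrite !expr2; nra.
rewrite !expr2 in H2 *; nra.
Qed.


Lemma form_cs (f : V -> V -> R)
  (hexp : forall p q (t : R), f (p + t%:C *: q) (p + t%:C *: q) = f p p + t * (2 * f p q) + t ^+ 2 * f q q)
  (hpsd : forall p, 0 <= f p p) p q : f p q ^+ 2 <= f p p * f q q.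
Proof. apply: quad_cs => // t; rewrite -hexp; exact: hpsd. Qed.

Lemma r_exp p q (t : R) : r (p + t%:C *: q) (p + t%:C *: q) = r p p + t * (2 * r p q) + t ^+ 2 * r q q.
Proof.
have := expand_u 1 t p q p q; rewrite !mul1r => ->.
rewrite (r_sym q p); lra.
Qed.

Lemma r_cs2 p q : r p q ^+ 2 <= (nrm p * nrm q) ^+ 2.
Proof. rewrite exprMn !nrm_sq; apply: (form_cs (fun p q => r p q)) => //; [exact: r_exp | exact: r_ge0]. Qed.

Lemma r_cs p q : `|r p q| <= nrm p * nrm q.
Proof.
have := r_cs2 p q; have := nrm_ge0 p; have := nrm_ge0 q.
move=> h1 h2 h3; have h4 := mulr_ge0 h2 h1; move: h3 h4; set x := r p q; set y := nrm p * nrm q => h3 h4.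
rewrite ler_norml; apply/andP; split; rewrite !expr2 in h3; nra.
Qed.

Lemma r_le p q : r p q <= nrm p * nrm q.
Proof. exact: le_trans (ler_norm _) (r_cs p q). Qed.

Lemma r_geN p q : - (nrm p * nrm q) <= r p q.
Proof. have := r_cs p q; rewrite ler_norml => /andP[] //. Qed.

Lemma Reu (u : R[i]) a b : complex.Re (u * ip a b) = r (u *: a) b.
Proof. by rewrite ip_scalel. Qed.

Lemma nrm_u (u : R[i]) a : u * u^*%C = 1 -> nrm (u *: a) = nrm a.
Proof. by move=> hu; rewrite /hnorm ip_scalel ip_scaler mulrA hu mul1r. Qed.

Lemma Reu_le (u : R[i]) a b : u * u^*%C = 1 -> complex.Re (u * ip a b) <= nrm a * nrm b.
Proof. by move=> hu; rewrite Reu -(nrm_u u a hu) r_le. Qed.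

Lemma Reu_ge (u : R[i]) a b : u * u^*%C = 1 -> - (nrm a * nrm b) <= complex.Re (u * ip a b).
Proof. by move=> hu; rewrite Reu -(nrm_u u a hu) r_geN. Qed.

Lemma r_scale (t : R) y : r (t%:C *: y) (t%:C *: y) = t ^+ 2 * r y y.
Proof. by have := r_exp 0 y t; rewrite add0r !ip0l /= mulr0 mulr0 !add0r. Qed.

Lemma nrm_add2 p q : r (p + q) (p + q) <= 2 * r p p + 2 * r q q.
Proof.
have := r_exp p q 1; rewrite scale1r expr1n !mul1r => ->.
have := r_le p q; rewrite -nrm_sq -(nrm_sq q).
have := sqr_ge0 (nrm p - nrm q); rewrite !expr2; nra.
Qed.


Section Core.
Variables A B X As Bs : V -> V.
Hypothesis hAd : forall x y, A (x + y) = A x + A y.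
Hypothesis hAs : forall (a : R[i]) x, A (a *: x) = a *: A x.
Hypothesis hBd : forall x y, B (x + y) = B x + B y.
Hypothesis hBs : forall (a : R[i]) x, B (a *: x) = a *: B x.
Hypothesis hXd : forall x y, X (x + y) = X x + X y.
Hypothesis hXs : forall (a : R[i]) x, X (a *: x) = a *: X x.
Hypothesis hAadj : is_adjoint ip A As.
Hypothesis hBadj : is_adjoint ip B Bs.
Variables MA MB MX : R.
Hypothesis hMA : 0 <= MA.
Hypothesis hMB : 0 <= MB.
Hypothesis hMX : 0 <= MX.
Hypothesis bA : forall x, nrm (A x) <= MA * nrm x.
Hypothesis bB : forall x, nrm (B x) <= MB * nrm x.
Hypothesis bX : forall x, nrm (X x) <= MX * nrm x.
Variable u : R[i].
Hypothesis hu : u * u^*%C = 1.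

Definition sig p q := complex.Re (u * ip (X (B p)) (A q)) + complex.Re (u * ip (X (B q)) (A p)).

Lemma lin0 (T : V -> V) : (forall x y, T (x + y) = T x + T y) -> T 0 = 0.
Proof. move=> h; have := h 0 0; rewrite addr0 => /eqP; rewrite -subr_eq0 opprD addrA subrr add0r oppr_eq0 => /eqP //. Qed.

Lemma sig_exp p q (t : R) : sig (p + t%:C *: q) (p + t%:C *: q) = sig p p + t * (2 * sig p q) + t ^+ 2 * sig q q.
Proof.
rewrite /sig hBd hBs hXd hXs hAd hAs !expand_u; lra.
Qed.

Lemma sig_scale (t : R) y : sig (t%:C *: y) (t%:C *: y) = t ^+ 2 * sig y y.
Proof.
have := sig_exp 0 y t; rewrite add0r => ->.
rewrite /sig (lin0 _ hBd) (lin0 _ hXd) (lin0 _ hAd) !ip0l !ip0r !mulr0 /=; lra. Qed.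

Lemma sig_ub y : sig y y <= 2 * (MX * MB * MA) * nrm y ^+ 2.
Proof.
have h := Reu_le u (X (B y)) (A y) hu.
have h1 : nrm (X (B y)) <= MX * MB * nrm y.
  apply: le_trans (bX _) _; rewrite -mulrA ler_wpM2l //.
have h2 := bA y.
have := nrm_ge0 (X (B y)); have := nrm_ge0 (A y); have := nrm_ge0 y.
rewrite /sig; move: h h1 h2; set a := nrm (X (B y)); set b := nrm (A y); set n := nrm y.
set z := complex.Re _ => *.
have : a * b <= MX * MB * n * (MA * n) by apply: ler_pM.
rewrite !expr2; nra.
Qed.

Lemma sig_lb y : - (2 * (MX * MB * MA) * nrm y ^+ 2) <= sig y y.
Proof.
have h := Reu_ge u (X (B y)) (A y) hu.
have h1 : nrm (X (B y)) <= MX * MB * nrm y.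
  apply: le_trans (bX _) _; rewrite -mulrA ler_wpM2l //.
have h2 := bA y.
have := nrm_ge0 (X (B y)); have := nrm_ge0 (A y); have := nrm_ge0 y.
rewrite /sig; move: h h1 h2; set a := nrm (X (B y)); set b := nrm (A y); set n := nrm y.
set z := complex.Re _ => *.
have : a * b <= MX * MB * n * (MA * n) by apply: ler_pM.
rewrite !expr2; nra.
Qed.

Lemma sig_E x : sig x x <= MX * (r (A x) (A x) + r (B x) (B x)).
Proof.
have h := Reu_le u (X (B x)) (A x) hu.
have h1 := bX (B x).
have := nrm_ge0 (X (B x)); have := nrm_ge0 (A x); have := nrm_ge0 (B x).
rewrite -!nrm_sq /sig; move: h h1; set a := nrm (X (B x)); set b := nrm (A x); set c := nrm (B x).
set z := complex.Re _ => h h1 hc hb ha.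
have : a * b <= MX * c * b by apply: ler_wpM2r.
have := mulr_ge0 hMX (sqr_ge0 (b - c)). rewrite !expr2. nra.
Qed.

Lemma adj_bound (T Ts : V -> V) (M : R) : 0 <= M -> is_adjoint ip T Ts ->
  (forall x, nrm (T x) <= M * nrm x) -> forall y, nrm (Ts y) <= M * nrm y.
Proof.
move=> hM hadj bT y.
have h : nrm (Ts y) ^+ 2 <= nrm (T (Ts y)) * nrm y.
  by rewrite nrm_sq /= -hadj r_le.
have := bT (Ts y); have := nrm_ge0 (Ts y); have := nrm_ge0 y.
move: h; set a := nrm (Ts y); set b := nrm (T (Ts y)); set n := nrm y => h hn ha hb.
have : a ^+ 2 <= M * a * n by apply: le_trans h _; rewrite ler_wpM2r.
have [->|apos] := eqVneq a 0; first by rewrite mulr_ge0.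
have agt : 0 < a by rewrite lt_def apos ha.
rewrite expr2 => h'. rewrite -(ler_pM2l agt). nra.
Qed.

Definition K x := As (A x) + Bs (B x).

Lemma rK x : r (K x) x = r (A x) (A x) + r (B x) (B x).
Proof.
rewrite /K ip_addl raddfD /= (r_sym (As _)) (r_sym (Bs _)).
by rewrite -hAadj -hBadj.
Qed.

Lemma nrmK x : r (K x) (K x) <= 2 * (MA ^+ 4 + MB ^+ 4) * nrm x ^+ 2.
Proof.
apply: le_trans (nrm_add2 _ _) _.
have h1 := adj_bound _ _ _ hMA hAadj bA (A x).
have h2 := adj_bound _ _ _ hMB hBadj bB (B x).
have h3 := bA x. have h4 := bB x.
rewrite -!nrm_sq.
have := nrm_ge0 (As (A x)); have := nrm_ge0 (Bs (B x)); have := nrm_ge0 (A x);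
have := nrm_ge0 (B x); have := nrm_ge0 x.
move: h1 h2 h3 h4.
set a1 := nrm (As (A x)); set b1 := nrm (Bs (B x)); set a := nrm (A x); set b := nrm (B x); set n := nrm x.
move=> h1 h2 h3 h4 hn hb ha hb1 ha1.
have e1 : a1 ^+ 2 <= (MA * a) ^+ 2 by rewrite ler_pXn2r // ?nnegrE // mulr_ge0.
have e2 : (MA * a) ^+ 2 <= (MA * (MA * n)) ^+ 2 by rewrite ler_pXn2r ?nnegrE ?mulr_ge0 // ler_wpM2l.
have e3 : b1 ^+ 2 <= (MB * b) ^+ 2 by rewrite ler_pXn2r // ?nnegrE // mulr_ge0.
have e4 : (MB * b) ^+ 2 <= (MB * (MB * n)) ^+ 2 by rewrite ler_pXn2r ?nnegrE ?mulr_ge0 // ler_wpM2l.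
have -> : 2 * (MA ^+ 4 + MB ^+ 4) * n ^+ 2 = 2 * (MA * (MA * n)) ^+ 2 + 2 * (MB * (MB * n)) ^+ 2.
  by rewrite !exprMn; ring.
lra.
Qed.


Lemma core (c : R) : 0 <= c ->
  (forall x, sig (K x) x <= c * (r (A x) (A x) + r (B x) (B x))) ->
  forall x0, nrm x0 = 1 -> sig x0 x0 <= c.
Proof.
move=> hc hK x0 hx0.
have hMX0 := hMX. have hMA0 := hMA. have hMB0 := hMB.
set Ms := 2 * (MX * MB * MA).
have hMs : 0 <= Ms by rewrite /Ms !mulr_ge0.
set S := [set sig x x | x in [set x | nrm x = 1]].
have hS : has_sup S.
  split; first by exists (sig x0 x0); exists x0.
  exists Ms => _ [x /= hx <-]; have := sig_ub x; rewrite hx expr1n mulr1 //.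
set lam := sup S.
have ub : forall x, nrm x = 1 -> sig x x <= lam.
  by move=> x hx; apply: sup_upper_bound => //; exists x.
have psd : forall y, sig y y <= lam * r y y.
  move=> y; have [h0|hn] := eqVneq (nrm y) 0.
    have := sig_ub y; have := sig_lb y; rewrite -nrm_sq h0 expr0n /= mulr0 oppr0 mulr0.
    move=> h1 h2; have -> : sig y y = 0 by apply/le_anti; rewrite h1 h2.
    by [].
  have npos : 0 < nrm y by rewrite lt_def hn nrm_ge0.
  set t := (nrm y)^-1.
  have ht : nrm (t%:C *: y) = 1.
    rewrite /hnorm r_scale -nrm_sq -exprMn /t mulVf // expr1n; exact: sqrtr1.
  have := ub _ ht; rewrite sig_scale -nrm_sq.
  have tpos : 0 < t ^+ 2 by rewrite exprn_gt0 // invr_gt0.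
  move=> h.
  have e : sig y y = nrm y ^+ 2 * (t ^+ 2 * sig y y).
    by rewrite mulrA -exprMn /t divff // expr1n mul1r.
  by rewrite e [lam * _]mulrC ler_wpM2l // exprn_ge0 // nrm_ge0.
set g := fun p q => lam * r p q - sig p q.
have gpsd : forall p, 0 <= g p p by move=> p; rewrite /g subr_ge0.
have gexp : forall p q (t : R), g (p + t%:C *: q) (p + t%:C *: q) = g p p + t * (2 * g p q) + t ^+ 2 * g q q.
  by move=> p q t; rewrite /g r_exp sig_exp; ring.
have gcs := form_cs g gexp gpsd.
rewrite leNgt; apply/negP => hlt.
have lamc : c < lam by apply: lt_le_trans hlt (ub _ hx0).
have lampos : 0 < lam by apply: le_lt_trans hc lamc.
set MX' := MX + 1.
have hMX' : 0 < MX'.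
 rewrite /MX'. lra.
set C := (lam + Ms) * (2 * (MA ^+ 4 + MB ^+ 4)).
have hC : 0 <= C.
  rewrite /C mulr_ge0 //; first by lra.
  by rewrite mulr_ge0 // addr_ge0 // exprn_ge0.
set k := (lam - c) ^+ 2 * (lam / (2 * MX')) ^+ 2.
have kpos : 0 < k.
  rewrite /k mulr_gt0 // exprn_gt0 //; first by lra.
  by rewrite divr_gt0 //; lra.
set del := Order.min (lam / 2) (k / (2 * (C + 1))).
have delpos : 0 < del.
  rewrite /del lt_min; apply/andP; split; first by lra.
  rewrite divr_gt0 //; lra.
have del1 : del <= lam / 2 by rewrite /del ge_min lexx.
have del2 : del <= k / (2 * (C + 1)) by rewrite /del ge_min lexx orbT.
have [_ [x /= hx <-] hxlt] := sup_adherent delpos hS.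
have gxx : g x x <= del.
  by rewrite /g -nrm_sq hx expr1n mulr1; rewrite -/lam in hxlt; lra.
set e := r (A x) (A x) + r (B x) (B x).
have he : 0 <= e by rewrite /e addr_ge0 // r_ge0.
have gKx : (lam - c) * e <= g (K x) x.
  by rewrite /g rK; have := hK x; rewrite -/e; lra.
have gKK : g (K x) (K x) <= C.
  rewrite /g /C.
  have := nrmK x; rewrite hx expr1n mulr1 => h1.
  have := sig_lb (K x); rewrite nrm_sq -/Ms => h2.
  have h3 := r_ge0 (K x).
  have := ler_wpM2l (ltW lampos) h1.
  have := ler_wpM2l hMs h1.
  set P := r (K x) (K x); set Q := 2 * (MA ^+ 4 + MB ^+ 4). lra.
have ex : lam / (2 * MX') <= e.
  have := sig_E x; rewrite -/e => h1.
  rewrite -/lam in hxlt.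
  have h2 : lam / 2 <= MX' * e.
    have : MX * e <= MX' * e by rewrite ler_wpM2r // /MX'; lra.
    lra.
  rewrite ler_pdivrMr; last by lra.
  have -> : e * (2 * MX') = 2 * (MX' * e) by ring.
  lra.
have step1 : k <= g (K x) x ^+ 2.
  rewrite /k -exprMn; rewrite ler_pXn2r ?nnegrE //.
  - apply: le_trans gKx; rewrite ler_wpM2l //; lra.
  - rewrite mulr_ge0 //; first lra. rewrite divr_ge0 //; lra.
  - apply: le_trans gKx; rewrite mulr_ge0 //; lra.
have step2 : g (K x) x ^+ 2 <= C * del.
  apply: le_trans (gcs _ _) _.
  by apply: ler_pM => //; apply: gpsd.
have step3 : C * del <= C * (k / (2 * (C + 1))) by rewrite ler_wpM2l.
have step4 : C * (k / (2 * (C + 1))) < k.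
  rewrite mulrA ltr_pdivrMr; last by lra.
  nra.
lra.
Qed.

End Core.


Lemma ip_oppr z y : ip z (- y) = - ip z y.
Proof. by apply/eqP; rewrite -addr_eq0 -ip_addr addNr ip0r. Qed.

Lemma ip_ext v w : (forall x, ip x v = ip x w) -> v = w.
Proof.
move=> h; apply/eqP; rewrite -subr_eq0; apply/eqP.
case: hip => _ _ _ hd; apply: hd.
by rewrite ip_addr ip_oppr h subrr.
Qed.

Lemma adj_scale T Ts : is_adjoint ip T Ts -> forall a y, Ts (a *: y) = a *: Ts y.
Proof. by move=> hadj a y; apply: ip_ext => x; rewrite -hadj !ip_scaler hadj. Qed.

Lemma adj0 T Ts : is_adjoint ip T Ts -> Ts 0 = 0.
Proof. by move=> hadj; have := adj_scale _ _ hadj 0 0; rewrite !scale0r. Qed.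

Lemma ip_adjr T Ts : is_adjoint ip T Ts -> forall p q, ip p (T q) = ip (Ts p) q.
Proof. by move=> hadj p q; rewrite ip_conj hadj -ip_conj. Qed.

Lemma Re_le_norm (z : R[i]) : complex.Re z <= complex.Re `|z|%R.
Proof.
rewrite normc_def /=.
apply: le_trans (ler_norm _) _.
rewrite -sqrtr_sqr; apply: ler_wsqrtr; rewrite lerDl; exact: sqr_ge0.
Qed.

Lemma normu (u : R[i]) : u * u^*%C = 1 -> `|u|%R = 1.
Proof.
move=> hu; have h : `|u|%R ^+ 2 = 1 by rewrite sqr_normc.
have := normr_ge0 u; move/eqP: h; rewrite sqrf_eq1 => /orP[/eqP -> //|/eqP ->].
by rewrite oppr_ge0 ler10.
Qed.

Lemma Reu_norm (u z : R[i]) : u * u^*%C = 1 -> complex.Re (u * z) <= complex.Re `|z|%R.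
Proof. by move=> hu; apply: le_trans (Re_le_norm _) _; rewrite normrM (normu _ hu) mul1r. Qed.

Lemma exists_u (w0 : R[i]) : exists u : R[i], u * u^*%C = 1 /\ u * w0 = `|w0|%R.
Proof.
have [->|wn] := eqVneq w0 0.
  by exists 1; rewrite conjc1 mulr1 mulr0 normr0.
have n0 : `|w0|%R != 0 by rewrite normr_eq0.
have nr : (`|w0|%R)^*%C = `|w0|%R by rewrite normc_def conjc_real.
exists (`|w0|%R / w0); split; last by rewrite mulrVK // unitfE.
rewrite conjM conjc_inv nr mulrACA -expr2 sqr_normc -invfM divff //.
by rewrite mulf_neq0 // conjc_eq0.
Qed.

Lemma nrm_scale (t : R) v : 0 <= t -> nrm (t%:C *: v) = t * nrm v.
Proof. by move=> ht; rewrite /hnorm r_scale sqrtrM ?exprn_ge0 // sqrtr_sqr ger0_norm. Qed.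


Lemma final_step (A B X As Bs : V -> V)
  (hAd : forall x y, A (x + y) = A x + A y) (hAsc : forall (a : R[i]) x, A (a *: x) = a *: A x)
  (hBd : forall x y, B (x + y) = B x + B y) (hBsc : forall (a : R[i]) x, B (a *: x) = a *: B x)
  (hXd : forall x y, X (x + y) = X x + X y) (hXsc : forall (a : R[i]) x, X (a *: x) = a *: X x)
  (hAs : is_adjoint ip A As) (hBs : is_adjoint ip B Bs)
  (MA MB MX : R) (hMA : 0 <= MA) (hMB : 0 <= MB) (hMX : 0 <= MX)
  (bA : forall x, nrm (A x) <= MA * nrm x)
  (bB : forall x, nrm (B x) <= MB * nrm x)
  (bX : forall x, nrm (X x) <= MX * nrm x)
  (n w : R)
  (hN : forall b, nrm b = 1 -> nrm (A (As (X b)) + X (B (Bs b))) <= n)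
  (hD : forall z, hnorm (dsum_ip ip) z = 1 ->
     complex.Re `|dsum_ip ip (opmx (fun x => X (B (As x))) (fun _ => 0) (fun _ => 0)
                (fun x => B (As (X x))) z) z|%R <= w)
  x0 (hx0 : nrm x0 = 1) :
  complex.Re `|ip (As (X (B x0))) x0|%R <= 1 / 4 * n + 1 / 2 * w.
Proof.
have As0 := adj0 _ _ hAs. have Bs0 := adj0 _ _ hBs.
have A0 := lin0 _ hAd. have B0 := lin0 _ hBd. have X0 := lin0 _ hXd.
have AsS := adj_scale _ _ hAs. have BsS := adj_scale _ _ hBs.
have nrm00 : nrm 0 = 0 by rewrite /hnorm ip0l /= sqrtr0.
have Renorm_ge0 : forall z : R[i], 0 <= complex.Re `|z|%R.
  by move=> z; rewrite normc_def /= sqrtr_ge0.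
have hNb : forall b, nrm (A (As (X b)) + X (B (Bs b))) <= n * nrm b.
  move=> b; have [h0|hb] := eqVneq (nrm b) 0.
    by rewrite (nrm0_eq _ h0) X0 As0 A0 Bs0 B0 X0 addr0 nrm00 mulr0.
  have bpos : 0 < nrm b by rewrite lt_def hb nrm_ge0.
  set t := (nrm b)^-1.
  have tpos : 0 <= t by rewrite invr_ge0 nrm_ge0.
  have := hN (t%:C *: b); rewrite nrm_scale // mulVf // => /(_ erefl).
  rewrite hXsc AsS hAsc BsS hBsc hXsc -scalerDr nrm_scale //.
  move=> h; have := ler_wpM2l (nrm_ge0 b) h.
  by rewrite mulrA /t divff // mul1r mulrC.
have n0 : 0 <= n by apply: le_trans (hN _ hx0); exact: nrm_ge0.
have hz0 : hnorm (dsum_ip ip) (x0, 0) = 1 by rewrite /hnorm /dsum_ip /= ip0l addr0.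
have w0 : 0 <= w by apply: le_trans (hD _ hz0); exact: Renorm_ge0.
have hDb : forall u : R[i], u * u^*%C = 1 -> forall a b,
   complex.Re (u * (ip (X (B (As a))) a + ip (B (As (X b))) b)) <= w * (r a a + r b b).
  move=> u hu a b.
  have ha := r_ge0 a. have hb := r_ge0 b.
  have [h0|hs] := eqVneq (r a a + r b b) 0.
    have raa : r a a = 0 by lra.
    have rbb : r b b = 0 by lra.
    have ha0 : a = 0 by apply: nrm0_eq; rewrite /hnorm raa sqrtr0.
    have hb0 : b = 0 by apply: nrm0_eq; rewrite /hnorm rbb sqrtr0.
    by rewrite raa rbb addr0 mulr0 ha0 hb0 !ip0r addr0 mulr0.
  have spos : 0 < r a a + r b b by rewrite lt_def hs addr_ge0.
  set s := r a a + r b b.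
  set t := Num.sqrt s.
  have tpos : 0 < t by rewrite sqrtr_gt0.
  set v := t^-1.
  have vv2 : v ^+ 2 * s = 1 by rewrite /v /t exprVn sqr_sqrtr ?ltW // mulVf ?gt_eqF.
  have vv : v * v * s = 1 by rewrite -expr2.
  have hz : hnorm (dsum_ip ip) (v%:C *: a, v%:C *: b) = 1.
    rewrite /hnorm /dsum_ip /= raddfD /= !r_scale -mulrDr -/s.
    by rewrite vv2 sqrtr1.
  set W := ip (X (B (As a))) a + ip (B (As (X b))) b.
  have e : dsum_ip ip (opmx (fun x => X (B (As x))) (fun _ => 0) (fun _ => 0)
                (fun x => B (As (X x))) (v%:C *: a, v%:C *: b)) (v%:C *: a, v%:C *: b)
           = (v * v)%:C * W.
    rewrite /dsum_ip /opmx /= addr0 add0r.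
    rewrite AsS hBsc hXsc hXsc AsS hBsc !ip_scalel !ip_scaler conjc_real.
    by rewrite !mulrA -!rmorphM -mulrDr.
  have := hD _ hz; rewrite e normrM.
  have -> : `|(v * v)%:C|%R = (v * v)%:C.
    by apply: ger0_norm; rewrite ler0c mulr_ge0 // invr_ge0 ltW.
  rewrite Re_rM => h.
  apply: le_trans (Reu_norm _ _ hu) _.
  have e2 : complex.Re `|W|%R = s * (v * v * complex.Re `|W|%R).
    by rewrite mulrA (mulrC s) vv mul1r.
  rewrite e2 mulrC ler_wpM2r //; exact: ltW.
have [u [hu hw]] := exists_u (ip (X (B x0)) (A x0)).
have hc : 0 <= w + n / 2 by rewrite addr_ge0 // divr_ge0.
have hK : forall x, sig A B X u (K A B As Bs x) x <= (w + n / 2) * (r (A x) (A x) + r (B x) (B x)).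
  move=> x; rewrite /sig /K.
  set a := A x; set b := B x.
  rewrite hBd hXd ip_addl hAd ip_addr.
  have e1 : ip (X b) (A (As a)) = ip (A (As (X b))) a by rewrite (ip_adjr _ _ hAs) hAs.
  have e2 : ip (X b) (A (Bs b)) = ip (B (As (X b))) b by rewrite (ip_adjr _ _ hAs) hBs.
  rewrite e1 e2.
  have := hDb u hu a b.
  have := Reu_le u (A (As (X b)) + X (B (Bs b))) a hu.
  rewrite ip_addl.
  have := hNb b.
  have := nrm_ge0 a; have := nrm_ge0 b; rewrite -(nrm_sq a) -(nrm_sq b).
  rewrite !mulrDr !raddfD /=.
  set p1 := complex.Re (u * ip (X (B (As a))) a).
  set p2 := complex.Re (u * ip (X (B (Bs b))) a).
  set p3 := complex.Re (u * ip (A (As (X b))) a).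
  set p4 := complex.Re (u * ip (B (As (X b))) b).
  set na := nrm a; set nb := nrm b; set nN := nrm _.
  move=> hna hnb h1 h2 h3.
  have h4 : nN * na <= n * nb * na by apply: ler_wpM2r.
  have h5 := sqr_ge0 (na - nb).
  have h6 : 0 <= n * (na - nb) ^+ 2 by apply: mulr_ge0.
  rewrite !expr2 in h3 h5 h6 *. nra.
have := core _ _ _ _ _ hAd hAsc hBd hBsc hXd hXsc hAs hBs _ _ _ hMA hMB hMX bA bB bX _ hu _ hc hK _ hx0.
rewrite /sig -(ip_adjr _ _ hAs) -hw.
move=> h; lra.
Qed.

End IP.


Local Close Scope complex_scope.
Local Close Scope classical_set_scope.
Local Open Scope classical_set_scope.

Theorem mainTheorem7 (R : realType) (V : lmodType R[i]) (ip : V -> V -> R[i])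
  (hH : is_hilbert ip)
  (A B X As Bs : V -> V)
  (hA : bounded_op ip A) (hB : bounded_op ip B) (hX : bounded_op ip X)
  (hAs : is_adjoint ip A As) (hBs : is_adjoint ip B Bs) :
  (numrad ip (fun x => As (X (B x)))
   <= (1 / 4 : R)%:E * opnorm ip (fun x => (A (As (X x)) + X (B (Bs x)))%R)
      + (1 / 2 : R)%:E * numrad (dsum_ip ip)
          (opmx (fun x => X (B (As x))) (fun _ => 0%R) (fun _ => 0%R)
                (fun x => B (As (X x)))))%E.
Proof.
case: hH => hip _.
case: hA => hAd hAsc [MA0 bA0].
case: hB => hBd hBsc [MB0 bB0].
case: hX => hXd hXsc [MX0 bX0].
pose MA := `|MA0|%R. pose MB := `|MB0|%R. pose MX := `|MX0|%R.
have hMA : (0 <= MA)%R := normr_ge0 _.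
have hMB : (0 <= MB)%R := normr_ge0 _.
have hMX : (0 <= MX)%R := normr_ge0 _.
have bA : forall x, (hnorm ip (A x) <= MA * hnorm ip x)%R.
  by move=> x; apply: le_trans (bA0 x) _; apply: ler_wpM2r; [exact: sqrtr_ge0 | exact: ler_norm].
have bB : forall x, (hnorm ip (B x) <= MB * hnorm ip x)%R.
  by move=> x; apply: le_trans (bB0 x) _; apply: ler_wpM2r; [exact: sqrtr_ge0 | exact: ler_norm].
have bX : forall x, (hnorm ip (X x) <= MX * hnorm ip x)%R.
  by move=> x; apply: le_trans (bX0 x) _; apply: ler_wpM2r; [exact: sqrtr_ge0 | exact: ler_norm].
apply: ge_ereal_sup => _ [x0 hx0' <-].
have hx0 : hnorm ip x0 = 1%R := hx0'.
set N := (fun x => A (As (X x)) + X (B (Bs x)))%R.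
set D := opmx _ _ _ _.
have on_ub : forall b, hnorm ip b = 1%R -> ((hnorm ip (N b))%:E <= opnorm ip N)%E.
  by move=> b hb; apply: ereal_sup_ubound; exists b.
have wn_ub : forall z, hnorm (dsum_ip ip) z = 1%R ->
   ((complex.Re `|dsum_ip ip (D z) z|%R)%:E <= numrad (dsum_ip ip) D)%E.
  by move=> z hz; apply: ereal_sup_ubound; exists z.
have hz0 : hnorm (dsum_ip ip) (x0, 0%R) = 1%R.
  by rewrite /hnorm /dsum_ip /= ip0l // addr0.
have on_ge := on_ub x0 hx0.
have wn_ge := wn_ub _ hz0.
move: on_ub wn_ub on_ge wn_ge.
case: (opnorm ip N) => [n| |]; case: (numrad (dsum_ip ip) D) => [w| |] => on_ub wn_ub on_ge wn_ge;
  rewrite ?leeNy_eq // in on_ge wn_ge.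
all: try by rewrite leey.
1: rewrite -!EFinM -EFinD lee_fin.
1: apply: (final_step _ _ _ hip _ _ _ _ _ hAd hAsc hBd hBsc hXd hXsc hAs hBs _ _ _ hMA hMB hMX bA bB bX).
1: by move=> b hb; have := on_ub b hb; rewrite lee_fin.
1: by move=> z hz; have := wn_ub z hz; rewrite lee_fin.
1: exact: hx0.
1: by rewrite [X in (_ + X)%E]mulry gtr0_sg ?divr_gt0 // mul1e -EFinM addey ?leey.
1: by rewrite [X in (X + _)%E]mulry gtr0_sg ?divr_gt0 // mul1e -EFinM addye ?leey.
1: rewrite [X in (X + _)%E]mulry [X in (_ + X)%E]mulry gtr0_sg ?divr_gt0 // gtr0_sg ?divr_gt0 // !mul1e; exact: leey.
Qed.
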